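(* Let $m_1\in\mathbb N$, $\theta=(\theta_1,\dots,\theta_{m_1})$ with $\theta_i>0$, real numbers $d_1,\dots,d_{m_1}$, and a $C^1$ function $u=(u_1,\dots,u_{m_1})$ of $x\in\mathbb{R}^n$ with values in $[0,\infty)^{m_1}$. Then for every integer $p\ge2$, $$\sum_{|\beta|=p-1}\binom{p}{\beta}\theta^{\beta^2}\sum_{i=1}^{m_1}\theta_i^{2\beta_i+1}d_i\nabla u_i\cdot\nabla u^\beta=\sum_{|\beta|=p-2}\binom p\beta\theta^{\beta^2}u^\beta\sum_{l=1}^n\sum_{i,j=1}^{m_1}a_{i,j}\frac{\partial u_i}{\partial x_l}\frac{\partial u_j}{\partial x_l},$$ where, for each $\beta$, $(a_{i,j})$ is the symmetric $m_1\times m_1$ matrix with $a_{i,j}=\frac{d_i+d_j}{2}\theta_i^{2\beta_i+1}\theta_j^{2\beta_j+1}$ for $i\ne j$ and $a_{i,i}=d_i\theta_i^{4\beta_i+4}$.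
   Context: Sums are over $\beta\in\mathbb Z_+^{m_1}$ ($m_1$-tuples of nonnegative integers); $|\beta|=\sum_i\beta_i$, $\beta^2=(\beta_1^2,\dots,\beta_{m_1}^2)$, $z^\alpha=\prod_iz_i^{\alpha_i}$ with $0^0=1$, and $\binom{p}{\beta}=\frac{p!}{\beta_1!\cdots\beta_{m_1}!}$ (also used when $|\beta|<p$). *)

(* Defs.v *)
From HB Require Import structures.
From mathcomp Require Import all_boot all_order all_algebra.
From mathcomp Require Import all_classical all_reals all_analysis.
Set Implicit Arguments. Unset Strict Implicit. Unset Printing Implicit Defensive.
Import Order.TTheory GRing.Theory Num.Theory.
Import numFieldNormedType.Exports.
Local Open Scope ring_scope.

(* Multi-indices beta in Z_+^{m1} with all entries <= p are encoded as
   {ffun 'I_m1 -> 'I_p.+1}; every beta with |beta| <= p is of this form. *)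
Definition mindex (m1 p : nat) := {ffun 'I_m1 -> 'I_p.+1}.

Definition mabs (m1 p : nat) (b : mindex m1 p) : nat := (\sum_(i < m1) (b i : nat))%N.

(* binom(p, beta) = p! / (beta_1! ... beta_m1!)   (also when |beta| < p) *)
Definition mbinom (R : realType) (m1 p : nat) (b : mindex m1 p) : R :=
  (p`!)%:R / (\prod_(i < m1) ((b i : nat)`!)%:R).

Definition mpow (R : realType) (m1 p : nat) (z : 'I_m1 -> R) (b : mindex m1 p) : R :=
  \prod_(i < m1) z i ^+ (b i : nat).

Definition mpow_sq (R : realType) (m1 p : nat) (z : 'I_m1 -> R) (b : mindex m1 p) : R :=
  \prod_(i < m1) z i ^+ ((b i : nat) ^ 2)%N.

Definition ebasis (R : realType) (n : nat) (l : 'I_n) : 'rV[R]_n := delta_mx 0 l.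

Definition pderiv (R : realType) (n : nat) (f : 'rV[R]_n -> R) (l : 'I_n) (x : 'rV[R]_n) : R :=
  'D_(ebasis R l) f x.

Definition graddot (R : realType) (n : nat) (f g : 'rV[R]_n -> R) (x : 'rV[R]_n) : R :=
  \sum_(l < n) pderiv f l x * pderiv g l x.

Definition amat (R : realType) (m1 p : nat) (theta d : 'I_m1 -> R) (b : mindex m1 p)
    (i j : 'I_m1) : R :=
  if i == j then d i * theta i ^+ (4 * b i + 4)%N
  else (d i + d j) / 2 * theta i ^+ (2 * b i + 1)%N * theta j ^+ (2 * b j + 1)%N.

(* Main.v *)
Require Import Defs.
From HB Require Import structures.
From mathcomp Require Import all_boot all_order all_algebra.
From mathcomp Require Import all_classical all_reals all_analysis.
From mathcomp Require Import ring zify.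
Import Order.TTheory GRing.Theory Num.Theory.
Import numFieldNormedType.Exports.
Local Open Scope ring_scope.
Set Implicit Arguments. Unset Strict Implicit. Unset Printing Implicit Defensive.
Definition mdec (m1 p : nat) (j : 'I_m1) (b : mindex m1 p) : mindex m1 p :=
  [ffun k => if k == j then inord (b k).-1 else b k].
Definition minc (m1 p : nat) (j : 'I_m1) (b : mindex m1 p) : mindex m1 p :=
  [ffun k => if k == j then inord (b k).+1 else b k].

Lemma mdecE m1 p (j : 'I_m1) (b : mindex m1 p) k :
  (mdec j b k : nat) = if k == j then (b k).-1 else b k.
Proof.
rewrite ffunE; case: eqP => // _; rewrite inordK //.
exact: leq_ltn_trans (leq_pred _) (ltn_ord _).
Qed.

Lemma mincE m1 p (j : 'I_m1) (b : mindex m1 p) k : (b j < p)%N ->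
  (minc j b k : nat) = (b k + (k == j))%N.
Proof.
move=> hj; rewrite ffunE; case: eqP => [->|_]; last by rewrite addn0.
by rewrite inordK ?addn1.
Qed.

Lemma mdecK m1 p (j : 'I_m1) (b : mindex m1 p) : (0 < b j)%N -> minc j (mdec j b) = b.
Proof.
move=> hb; apply/ffunP => k; apply: val_inj => /=.
have hj : (mdec j b j < p)%N.
  rewrite mdecE; case: eqP => // _; rewrite -ltnS prednK //.
rewrite mincE //.
rewrite mdecE; case: eqP => [->|_]; last by rewrite addn0.
by rewrite addn1 prednK.
Qed.

Lemma mincK m1 p (j : 'I_m1) (b : mindex m1 p) : (b j < p)%N -> mdec j (minc j b) = b.
Proof.
move=> hb; apply/ffunP => k; apply: val_inj => /=.
rewrite mdecE mincE //; case: eqP => [->|_]; first by rewrite addn1.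
by rewrite addn0.
Qed.

Lemma mabs_minc m1 p (j : 'I_m1) (b : mindex m1 p) : (b j < p)%N -> mabs (minc j b) = (mabs b).+1.
Proof.
move=> hb; rewrite /mabs (eq_bigr _ (fun k _ => mincE k hb)) big_split /=.
have E : (\sum_(k < m1) (k == j) = 1)%N.
  rewrite (bigD1 j) //= eqxx big1 ?addn0 //.
  by move=> k /negPf ->.
by rewrite E addn1.
Qed.

Lemma is_derive_prod (R : realType) (V : normedModType R) m (f : 'I_m -> V -> R) (x v : V) (df : 'I_m -> R) :
 (forall i, is_derive x v (f i) (df i)) ->
 is_derive x v (fun y => \prod_(i < m) f i y) (\sum_(i < m) df i * \prod_(k < m | k != i) f k x).
Proof.
elim: m f df => [|m IH] f df hf.
  rewrite big_ord0.
  have -> : (fun y => \prod_(i < 0) f i y) = cst 1 by apply: funext => y; rewrite big_ord0.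
  exact: is_derive_cst.
have -> : (fun y => \prod_(i < m.+1) f i y) =
   (fun y => \prod_(i < m) f (widen_ord (leqnSn m) i) y) * f ord_max.
  by apply: funext => y; rewrite big_ord_recr.
have H := is_deriveM (IH _ _ (fun i => hf (widen_ord (leqnSn m) i))) (hf ord_max).
apply: (is_derive_eq H). rewrite /GRing.scale /=. set RR := (X in _ = X). have -> : RR = \sum_(i < m.+1) (df i * \prod_(k < m.+1 | k != i) f k x : R) by []. rewrite big_ord_recr /=.
rewrite [X in _ = _ + X](_ : _ = df ord_max * \prod_(i < m) f (widen_ord (leqnSn m) i) x); last first.
  congr (_ * _); rewrite big_mkcond big_ord_recr /= eqxx mulr1; apply: eq_bigr => i _.
  by rewrite -(inj_eq val_inj) /= ltn_eqF.
rewrite addrC [X in _ + X = _]mulrC; congr (_ + _).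
rewrite (@mulr_sumr R); apply: eq_bigr => i _.
rewrite [in RHS]big_mkcond [in RHS]big_ord_recr /=.
have -> : (ord_max != widen_ord (leqnSn m) i) by rewrite -(inj_eq val_inj) /= gtn_eqF.
rewrite mulrCA; congr (_ * _); rewrite mulrC; congr (_ * _).
rewrite big_mkcond; apply: eq_bigr => k _.
by rewrite -(inj_eq val_inj) /= (inj_eq val_inj).
Qed.

Lemma pderiv_mpow (R : realType) n m1 p (u : 'I_m1 -> 'rV[R]_n -> R)
  (hdiff : forall i x, differentiable (u i) x) (b : mindex m1 p) l x :
  pderiv (fun y => mpow (fun k => u k y) b) l x =
  \sum_(j < m1) (b j)%:R * mpow (fun k => u k x) (mdec j b) * pderiv (u j) l x.
Proof.
rewrite /pderiv /mpow.
have hd : forall k, is_derive x (ebasis R l) (fun y => u k y ^+ b k)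
   (((b k)%:R * u k x ^+ (b k).-1) *: 'D_(ebasis R l) (u k) x).
  move=> k; rewrite -exprfctE; apply: is_deriveX.
  apply: derivableP; exact: diff_derivable.
have hp := is_derive_prod hd.
rewrite derive_val.
apply: eq_bigr => j _; rewrite /GRing.scale /=.
rewrite [in RHS](bigD1 j) //= mdecE eqxx.
rewrite [X in _ = _ * (_ * X) * _](eq_bigr (fun k => u k x ^+ b k)); last first.
  by move=> k /negPf hk; rewrite mdecE hk.
ring.
Qed.
Lemma mbinom_minc (R : realType) m1 p (j : 'I_m1) (g : mindex m1 p) : (g j < p)%N ->
  mbinom R (minc j g) * (minc j g j)%:R = mbinom R g.
Proof.
move=> hj; rewrite /mbinom mincE // eqxx addn1.
rewrite (bigD1 j) //= [in RHS](bigD1 j) //= mincE // eqxx addn1.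
rewrite (eq_bigr (fun k => ((g k)`!)%:R)); last first.
  by move=> k /negPf hk; rewrite mincE // hk addn0.
have h1 : (\prod_(k < m1 | k != j) ((g k)`!)%:R : R) != 0.
  by apply/prodf_neq0 => k _; rewrite pnatr_eq0 -lt0n fact_gt0.
have h2 : (((g j)`!)%:R : R) != 0 by rewrite pnatr_eq0 -lt0n fact_gt0.
have h3 : (1 + (g j)%:R : R) != 0 by rewrite addrC natr1 pnatr_eq0.
rewrite factS natrM; field.
by rewrite h1 h2 h3.
Qed.

Lemma mpow_sq_minc (R : realType) m1 p (theta : 'I_m1 -> R) (j : 'I_m1) (g : mindex m1 p) :
  (g j < p)%N ->
  mpow_sq theta (minc j g) = theta j ^+ (2 * g j + 1) * mpow_sq theta g.
Proof.
move=> hj; rewrite /mpow_sq (bigD1 j) //= [in RHS](bigD1 j) //= mincE // eqxx addn1.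
rewrite (eq_bigr (fun k => theta k ^+ (g k ^ 2))); last first.
  by move=> k /negPf hk; rewrite mincE // hk addn0.
rewrite mulrA -exprD; congr (_ ^+ _ * _).
rewrite !expnS !expn0 !muln1; lia.
Qed.

Lemma theta_minc (R : realType) m1 p (theta : 'I_m1 -> R) (j : 'I_m1) (g : mindex m1 p) i :
  (g j < p)%N ->
  theta i ^+ (2 * minc j g i + 1) = theta i ^+ (2 * g i + 1) * (if i == j then theta i ^+ 2 else 1).
Proof.
move=> hj; rewrite mincE //; case: eqP => _; last by rewrite addn0 mulr1.
by rewrite -exprD; congr (_ ^+ _); lia.
Qed.

Lemma sym_sum (R : realType) m (c a : 'I_m -> 'I_m -> R) (Y : 'I_m -> R) :
  (forall i j, a i j = (c i j + c j i) / 2) ->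
  \sum_(i < m) \sum_(j < m) c i j * Y i * Y j = \sum_(i < m) \sum_(j < m) a i j * Y i * Y j.
Proof.
move=> ha.
set S1 := \sum_(i < m) \sum_(j < m) c i j * Y i * Y j.
have E2 : \sum_(i < m) \sum_(j < m) c j i * Y i * Y j = S1.
  rewrite exchange_big; apply: eq_bigr => i _; apply: eq_bigr => j _; ring.
have -> : \sum_(i < m) \sum_(j < m) a i j * Y i * Y j =
   (\sum_(i < m) \sum_(j < m) (c i j * Y i * Y j + c j i * Y i * Y j)) / 2.
  rewrite mulr_suml; apply: eq_bigr => i _; rewrite mulr_suml; apply: eq_bigr => j _.
  rewrite ha; ring.
have -> : \sum_(i < m) \sum_(j < m) (c i j * Y i * Y j + c j i * Y i * Y j) = S1 + S1.
  rewrite (eq_bigr (fun i => \sum_(j < m) c i j * Y i * Y j + \sum_(j < m) c j i * Y i * Y j)); last first.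
    by move=> i _; rewrite big_split.
  by rewrite big_split /= E2.
have h2 : (2 : R) != 0 by rewrite pnatr_eq0.
by clearbody S1; field.
Qed.
Definition cmat (R : realType) m1 p (theta d : 'I_m1 -> R) (g : mindex m1 p) (i j : 'I_m1) : R :=
  theta i ^+ (2 * g i + 1) * (if i == j then theta i ^+ 2 else 1) * d i * theta j ^+ (2 * g j + 1).

Lemma amat_sym (R : realType) m1 p (theta d : 'I_m1 -> R) (g : mindex m1 p) i j :
  amat theta d g i j = (cmat theta d g i j + cmat theta d g j i) / 2.
Proof.
rewrite /amat /cmat; case: eqP => [->|/eqP hij].
  rewrite eqxx.
  have -> : (4 * g j + 4 = (2 * g j + 1 + 2) + (2 * g j + 1))%N by lia.
  rewrite !exprD.
  move: (theta j ^+ (2 * g j)) => A.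
  have h2 : (2 : R) != 0 by rewrite pnatr_eq0.
  by field.
rewrite eq_sym (negPf hij) !mulr1.
move: (theta i ^+ (2 * g i + 1)) (theta j ^+ (2 * g j + 1)) => A B.
have h2 : (2 : R) != 0 by rewrite pnatr_eq0.
by field.
Qed.

Lemma graddot_mpow (R : realType) n m1 p (u : 'I_m1 -> 'rV[R]_n -> R)
  (hdiff : forall i x, differentiable (u i) x) (b : mindex m1 p) i x :
  graddot (u i) (fun y => mpow (fun k => u k y) b) x =
  \sum_(l < n) pderiv (u i) l x *
     \sum_(j < m1) (b j)%:R * mpow (fun k => u k x) (mdec j b) * pderiv (u j) l x.
Proof. by apply: eq_bigr => l _; rewrite pderiv_mpow. Qed.

Unset Implicit Arguments.
Theorem lemmaA2 (R : realType) (m1 n : nat) (theta d : 'I_m1 -> R)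
  (u : 'I_m1 -> 'rV[R]_n -> R)
  (htheta : forall i, 0 < theta i)
  (hdiff : forall i x, differentiable (u i) x)
  (hcont : forall i l, continuous (pderiv (u i) l))
  (hpos : forall i x, 0 <= u i x)
  (p : nat) (hp : (2 <= p)%N) (x : 'rV[R]_n) :
  \sum_(b : mindex m1 p | mabs b == p.-1)
     mbinom R b * mpow_sq theta b *
     \sum_(i < m1) theta i ^+ (2 * b i + 1)%N * d i *
        graddot (u i) (fun y => mpow (fun k => u k y) b) x
  =
  \sum_(b : mindex m1 p | mabs b == p.-2)
     mbinom R b * mpow_sq theta b * mpow (fun k => u k x) b *
     \sum_(l < n) \sum_(i < m1) \sum_(j < m1)
        amat theta d b i j * pderiv (u i) l x * pderiv (u j) l x.
Proof.
pose X := fun i l => pderiv (u i) l x.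
pose M := fun (b : mindex m1 p) => mpow (fun k => u k x) b.
pose G (b : mindex m1 p) (j : 'I_m1) := mbinom R b * mpow_sq theta b * (b j)%:R * M (mdec j b) *
   \sum_(l < n) \sum_(i < m1) theta i ^+ (2 * b i + 1) * d i * X i l * X j l.
pose H (g : mindex m1 p) (j : 'I_m1) := mbinom R g * mpow_sq theta g * M g *
   \sum_(l < n) \sum_(i < m1) cmat theta d g i j * X i l * X j l.
have stepA : \sum_(b : mindex m1 p | mabs b == p.-1)
     mbinom R b * mpow_sq theta b *
     \sum_(i < m1) theta i ^+ (2 * b i + 1)%N * d i *
        graddot (u i) (fun y => mpow (fun k => u k y) b) x
   = \sum_(j < m1) \sum_(b : mindex m1 p | mabs b == p.-1) G b j.
  rewrite exchange_big; apply: eq_bigr => b _.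
  transitivity (\sum_(i < m1) \sum_(l < n) \sum_(j < m1)
     mbinom R b * mpow_sq theta b * (b j)%:R * M (mdec j b) *
     (theta i ^+ (2 * b i + 1) * d i * X i l * X j l)).
    rewrite big_distrr; apply: eq_bigr => i _ /=.
    rewrite graddot_mpow // mulrA big_distrr; apply: eq_bigr => l _ /=.
    rewrite mulrA big_distrr; apply: eq_bigr => j _ /=.
    rewrite /M /X; ring.
  rewrite exchange_big /=.
  transitivity (\sum_(l < n) \sum_(j < m1) \sum_(i < m1)
     mbinom R b * mpow_sq theta b * (b j)%:R * M (mdec j b) *
     (theta i ^+ (2 * b i + 1) * d i * X i l * X j l)).
    by apply: eq_bigr => l _; rewrite exchange_big.
  rewrite exchange_big; apply: eq_bigr => j _ /=.
  rewrite /G big_distrr; apply: eq_bigr => l _ /=.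
  by rewrite big_distrr.
have stepB : forall j, \sum_(b : mindex m1 p | mabs b == p.-1) G b j
    = \sum_(g : mindex m1 p | mabs g == p.-2) H g j.
  move=> j.
  rewrite (bigID (fun b : mindex m1 p => (0 < b j)%N)) /=.
  rewrite [X in _ + X = _]big1 ?addr0; last first.
    move=> b /andP[_]; rewrite -eqn0Ngt => /eqP hb.
    by rewrite /G hb mulr0n mulr0 !mul0r.
  rewrite (reindex_onto (minc j) (mdec j)) /=; last first.
    by move=> b /andP[_ hb]; exact: mdecK.
  have le_abs : forall g : mindex m1 p, (g j <= mabs g)%N.
    by move=> g; rewrite /mabs (bigD1 j) //= leq_addr.
  rewrite (eq_bigl (fun g : mindex m1 p => mabs g == p.-2)); last first.
    move=> g /=; case: (ltnP (g j) p) => hg.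
      rewrite mincK // eqxx andbT mabs_minc // mincE // eqxx addn1 ltn0Sn andbT.
      have -> : p.-1 = (p.-2).+1 by case: (p) hp => [|[|]].
      by rewrite eqSS.
    have -> : (minc j g j : nat) = 0%N.
      by rewrite ffunE eqxx /inord val_insubd ltnS ltnNge hg.
    rewrite ltnn andbF andFb; apply/esym/negbTE/eqP => E.
    have := le_abs g; lia.
  apply: eq_bigr => g /eqP hg.
  have hgj : (g j < p)%N by have := le_abs g; lia.
  rewrite /G /H mincK // -(mbinom_minc _ hgj) (mpow_sq_minc _ hgj).
  have -> : \sum_(l < n) \sum_(i < m1) cmat theta d g i j * X i l * X j l =
     theta j ^+ (2 * g j + 1) * \sum_(l < n) \sum_(i < m1)
        theta i ^+ (2 * minc j g i + 1) * d i * X i l * X j l.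
    rewrite big_distrr; apply: eq_bigr => l _ /=; rewrite big_distrr; apply: eq_bigr => i _ /=.
    rewrite theta_minc // /cmat; ring.
  ring.
rewrite stepA (eq_bigr _ (fun j _ => stepB j)) exchange_big /=.
apply: eq_bigr => g _.
rewrite /H -big_distrr /=; congr (_ * _).
rewrite exchange_big; apply: eq_bigr => l _ /=.
rewrite exchange_big /=.
apply: (@sym_sum R m1 (cmat theta d g) (amat theta d g) (fun i => X i l)) => i j.
exact: amat_sym.
Qed.
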